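(* Let $\rho_\chi(p,\pi/8)=p|\Psi_s\rangle\langle\Psi_s|+(1-p)\,|00\rangle\langle00|\otimes\tfrac{I_2}{2}$ with $|\Psi_s\rangle=\cos\frac{\pi}{8}|000\rangle+\sin\frac{\pi}{8}|111\rangle$. For diagonal filters $F_A=\mathrm{diag}(x,1)$, $F_B=\mathrm{diag}(y,1)$, $F_C=\mathrm{diag}(z,1)$ with $x,y,z>0$, let $\rho'=\frac1N(F_A\otimes F_B\otimes F_C)\rho_\chi(p,\pi/8)(F_A\otimes F_B\otimes F_C)^\dagger$, where $$N=\tfrac{2-\sqrt2}{4}p+\tfrac{1-p}{2}x^2y^2+\tfrac{2+\sqrt2 p}{4}x^2y^2z^2 .$$ Then the $3\times 9$ matrix $M'_{j,ik}=\mathrm{tr}[\rho'(\sigma_i\otimes\sigma_j\otimes\sigma_k)]$ has singular values $\frac{pxyz}{N},\frac{pxyz}{N},\frac{|D|}{N}$ with $D=-\tfrac{2-\sqrt2}{4}p-\tfrac{1-p}{2}x^2y^2+\tfrac{2+\sqrt2p}{4}x^2y^2z^2$; whenever $pxyz>|D|$, the maximum of $|\mathrm{tr}(\mathcal{S}\rho')|$ over Svetlichny operators equals $4pxyz/N$. Moreover, for every $p\in[0.3697,1]$ there exist $x,y,z>0$ such that $\rho'$ violates the Svetlichny inequality, i.e. $\max_{\mathcal{S}}|\mathrm{tr}(\mathcal{S}\rho')|>4$.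
   Context: $\sigma_1,\sigma_2,\sigma_3$ are the Pauli matrices, $I_2$ the $2\times2$ identity. For real unit vectors $\vec a,\vec a',\vec b,\vec b',\vec c,\vec c'\in\mathbb{R}^3$ let $A=\vec a\cdot\vec\sigma=\sum_k a_k\sigma_k$, and similarly $A',B,B',C,C'$. The Svetlichny operator is $$\mathcal{S}=A\otimes[(B+B')\otimes C+(B-B')\otimes C']+A'\otimes[(B-B')\otimes C-(B+B')\otimes C'],$$ and maxima are over all choices of the six unit vectors. A state violates the Svetlichny inequality if $|\mathrm{tr}(\mathcal{S}\rho)|>4$ for some such choice. *)

(* Defs.v *)
From HB Require Import structures.
From mathcomp Require Import all_boot all_order all_algebra.
From mathcomp Require Import all_classical all_reals all_analysis.
From mathcomp Require Import complex mxtens.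

Set Implicit Arguments.
Unset Strict Implicit.
Unset Printing Implicit Defensive.

Import Order.TTheory GRing.Theory Num.Theory.
Local Open Scope ring_scope.
Local Open Scope complex_scope.

Section Svetlichny.
Variable R : realType.
Local Notation C := (R[i]).

(* Pauli matrices sigma_1, sigma_2, sigma_3 (indexed by 'I_3 = {0,1,2}) *)
Definition pauli (k : 'I_3) : 'M[C]_2 :=
  \matrix_(r < 2, s < 2)
    match nat_of_ord k, nat_of_ord r, nat_of_ord s with
    | 0%N, 0%N, 1%N => 1
    | 0%N, 1%N, 0%N => 1
    | 1%N, 0%N, 1%N => - 'i
    | 1%N, 1%N, 0%N => 'i
    | 2%N, 0%N, 0%N => 1
    | 2%N, 1%N, 1%N => -1
    | _, _, _ => 0
    end.

Definition dagger m n (A : 'M[C]_(m, n)) : 'M[C]_(n, m) := (map_mx conjc A)^T.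

Definition unit3 (a : 'rV[R]_3) : Prop := \sum_(k < 3) a 0 k ^+ 2 = 1.
Definition dotsig (a : 'rV[R]_3) : 'M[C]_2 := \sum_(k < 3) (a 0 k)%:C *: pauli k.

Definition svetlichny (a a' b b' c c' : 'rV[R]_3) : 'M[C]_(2 * (2 * 2)) :=
  let A := dotsig a in let A' := dotsig a' in
  let B := dotsig b in let B' := dotsig b' in
  let Cc := dotsig c in let Cc' := dotsig c' in
  A *t ((B + B') *t Cc + (B - B') *t Cc') + A' *t ((B - B') *t Cc - (B + B') *t Cc').

Definition svet_val (rho : 'M[C]_(2 * (2 * 2))) (a a' b b' c c' : 'rV[R]_3) : R :=
  ComplexField.Normc.normc (\tr (svetlichny a a' b b' c c' *m rho)).

Definition is_max_svet (rho : 'M[C]_(2 * (2 * 2))) (v : R) : Prop :=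
  (forall a a' b b' c c', unit3 a -> unit3 a' -> unit3 b -> unit3 b' ->
      unit3 c -> unit3 c' -> svet_val rho a a' b b' c c' <= v) /\
  (exists a a' b b' c c', (unit3 a /\ unit3 a' /\ unit3 b /\ unit3 b' /\ unit3 c /\ unit3 c') /\ svet_val rho a a' b b' c c' = v).

Definition violates_svet (rho : 'M[C]_(2 * (2 * 2))) : Prop :=
  exists a a' b b' c c', (unit3 a /\ unit3 a' /\ unit3 b /\ unit3 b' /\ unit3 c /\ unit3 c') /\ 4 < svet_val rho a a' b b' c c'.

Definition ket0 : 'cV[C]_2 := delta_mx 0 0.
Definition ket1 : 'cV[C]_2 := delta_mx 1 0.

Definition psi_s : 'cV[C]_(2 * (2 * 2)) :=
  (cos (pi / 8))%:C *: (ket0 *t (ket0 *t ket0))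
  + (sin (pi / 8))%:C *: (ket1 *t (ket1 *t ket1)).

Definition rho_chi (p : R) : 'M[C]_(2 * (2 * 2)) :=
  p%:C *: (psi_s *m dagger psi_s)
  + (1 - p)%:C *:
      (((ket0 *t ket0) *m dagger (ket0 *t ket0)) *t ((2%:R : C)^-1 *: 1%:M)
        : 'M[C]_((2 * 2) * 2)).

Definition filt (x : R) : 'M[C]_2 := diag_mx (\row_(i < 2) if i == 0 then x%:C else 1).

Definition Nf (p x y z : R) : R :=
  (2 - Num.sqrt 2) / 4 * p + (1 - p) / 2 * (x ^+ 2 * y ^+ 2)
  + (2 + Num.sqrt 2 * p) / 4 * (x ^+ 2 * y ^+ 2 * z ^+ 2).

Definition Df (p x y z : R) : R :=
  - ((2 - Num.sqrt 2) / 4 * p) - (1 - p) / 2 * (x ^+ 2 * y ^+ 2)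
  + (2 + Num.sqrt 2 * p) / 4 * (x ^+ 2 * y ^+ 2 * z ^+ 2).

Definition rho_f (p x y z : R) : 'M[C]_(2 * (2 * 2)) :=
  let F := filt x *t (filt y *t filt z) in
  (Nf p x y z)^-1%:C *: (F *m rho_chi p *m dagger F).

(* correlation matrix M_{j, ik} = tr[rho (sigma_i (x) sigma_j (x) sigma_k)];
   the column index c : 'I_(3*3) encodes the pair (i, k) as 3 i + k *)
Definition corr_mx (rho : 'M[C]_(2 * (2 * 2))) : 'M[C]_(3, 3 * 3) :=
  \matrix_(j < 3, c < 3 * 3)
    let ik := mxtens_unindex c in
    \tr (rho *m (pauli ik.1 *t (pauli j *t pauli ik.2))).

(* s is the list (multiset) of singular values of M (m <= n): the nonnegative
   square roots of the eigenvalues of M M^dagger, counted with multiplicity *)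
Definition singular_values_are m n (M : 'M[C]_(m, n)) (s : seq R) : Prop :=
  [/\ size s = m, all (fun t => 0 <= t) s
    & char_poly (M *m dagger M) = \prod_(t <- s) ('X - ((t ^+ 2)%:C)%:P)].

End Svetlichny.

(* Main.v *)
Require Import Defs.
From HB Require Import structures.
From mathcomp Require Import all_boot all_order all_algebra.
From mathcomp Require Import all_classical all_reals all_analysis.
From mathcomp Require Import complex mxtens.
From mathcomp Require Import ring lra.
Import Order.TTheory GRing.Theory Num.Theory.
Local Open Scope ring_scope.

Section S.
Local Open Scope complex_scope.
Variable R : realType.
Local Notation C := (R[i]).
Local Notation co := ((cos (pi / 8 : R))%:C : C).
Local Notation si := ((sin (pi / 8 : R))%:C : C).
Definition cR : R := cos (pi / 8).
Definition sR : R := sin (pi / 8).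
Definition rcR (p : R) (r s : nat) : R :=
  match r, s with
  | 0%N, 0%N => p * cR * cR + (1 - p) / 2
  | 1%N, 1%N => (1 - p) / 2
  | 0%N, 7%N => p * cR * sR
  | 7%N, 0%N => p * cR * sR
  | 7%N, 7%N => p * sR * sR
  | _, _ => 0
  end.
Lemma pairM (a b c d : R) : (a +i* b) * (c +i* d) = (a * c - b * d) +i* (a * d + b * c) :> C.
Proof. by []. Qed.
Lemma pairD (a b c d : R) : (a +i* b) + (c +i* d) = (a + c) +i* (b + d) :> C.
Proof. by []. Qed.
Lemma pairN (a b : R) : - (a +i* b) = (- a) +i* (- b) :> C.
Proof. by []. Qed.
Lemma realCM (a b : R) : a%:C * b%:C = (a * b)%:C :> C.
Proof. by rewrite -[a%:C]/(a +i* 0) -[b%:C]/(b +i* 0) pairM !mulr0 mul0r subr0 addr0. Qed.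
Lemma realCD (a b : R) : a%:C + b%:C = (a + b)%:C :> C.
Proof. by rewrite -[a%:C]/(a +i* 0) -[b%:C]/(b +i* 0) pairD addr0. Qed.
Lemma realCN (a : R) : - a%:C = (- a)%:C :> C.
Proof. by rewrite -[a%:C]/(a +i* 0) pairN oppr0. Qed.
Lemma realC0 : (0 : R)%:C = 0 :> C. Proof. by []. Qed.
Lemma realC1 : (1 : R)%:C = 1 :> C. Proof. by []. Qed.
Lemma inv2C : (2%:R : C)^-1 = (2^-1 : R)%:C.
Proof.
apply: (@mulfI _ (2%:R : C)); first by rewrite pnatr_eq0.
rewrite mulfV ?pnatr_eq0 //.
have -> : (2%:R : C) = (2 : R)%:C by rewrite -realC1 !mulr2n realCD.
by rewrite realCM mulfV ?pnatr_eq0.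
Qed.
Lemma conjC_real (a : R) : conjc (a%:C) = a%:C.
Proof. by rewrite /= oppr0. Qed.

Lemma ket3E (a b c : 'I_2) (r : 'I_(2 * (2 * 2))) :
  ((delta_mx a 0 : 'cV[C]_2) *t ((delta_mx b 0 : 'cV[C]_2) *t (delta_mx c 0 : 'cV[C]_2))) r 0
   = ((r : nat) == 4 * a + 2 * b + c)%N%:R.
Proof.
rewrite !mxE.
case: r => [[|[|[|[|[|[|[|[|//]]]]]]]] Hr]; case: a => [[|[|//]] Ha]; case: b => [[|[|//]] Hb]; case: c => [[|[|//]] Hc];
rewrite /= ?mulr1 ?mulr0 ?mul0r //.
Qed.
Lemma addE m n (A B : 'M[C]_(m,n)) i j : (A + B) i j = A i j + B i j.
Proof. by rewrite mxE. Qed.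
Lemma scaleE m n a (A : 'M[C]_(m,n)) i j : (a *: A) i j = a * A i j.
Proof. by rewrite mxE. Qed.
Lemma outerE m (v w : 'cV[C]_m) i j : (v *m dagger w) i j = v i 0 * conjc (w j 0).
Proof. by rewrite mxE big_ord1 !mxE. Qed.
Lemma tensE m n p q (A : 'M[C]_(m,n)) (B : 'M[C]_(p,q)) i j :
  (A *t B) i j = A (mxtens_unindex i).1 (mxtens_unindex j).1 * B (mxtens_unindex i).2 (mxtens_unindex j).2.
Proof. by rewrite mxE. Qed.
Lemma psiE0 r : psi_s R r 0 = co * ((r : nat) == 0)%N%:R + si * ((r : nat) == 7)%N%:R.
Proof. by rewrite /psi_s addE !scaleE !ket3E. Qed.
Lemma psiE (r : 'I_(2 * (2 * 2))) : psi_s R r 0 = (if (r : nat) == 0%N then cos (pi / 8 : R) else if (r : nat) == 7%N then sin (pi / 8 : R) else 0)%:C.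
Proof. rewrite psiE0.
case: r => [[|[|[|[|[|[|[|[|//]]]]]]]] Hr]; by rewrite /= ?mulr1n ?mulr0n ?mulr1 ?mulr0 ?addr0 ?add0r.
Qed.
Lemma k00E (r : 'I_(2 * 2)) : (ket0 R *t ket0 R) r 0 = (if (r : nat) == 0%N then 1 else 0)%:C.
Proof.
rewrite tensE /ket0 !mxE. case: r => [[|[|[|[|//]]]] Hr] /=; by rewrite ?mulr1 ?mulr0.
Qed.
Lemma tensE' (A : 'M[C]_(2*2)) (B : 'M[C]_2) (r s : 'I_(2*(2*2))) :
  ((A *t B : 'M[C]_((2*2)*2)) : 'M[C]_(2*(2*2))) r s =
  A (@mxtens_unindex (2*2) 2 r).1 (@mxtens_unindex (2*2) 2 s).1 * B (@mxtens_unindex (2*2) 2 r).2 (@mxtens_unindex (2*2) 2 s).2.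
Proof. by rewrite mxE. Qed.
Lemma rho_chiE (p : R) (r s : 'I_(2 * (2 * 2))) : rho_chi p r s = (rcR p r s)%:C.
Proof.
rewrite /rho_chi addE !scaleE outerE !psiE tensE' outerE !k00E scaleE inv2C.
rewrite !conjC_real.
case: r => [[|[|[|[|[|[|[|[|//]]]]]]]] Hr]; case: s => [[|[|[|[|[|[|[|[|//]]]]]]]] Hs];
rewrite !mxE /= -/cR -/sR -?realC1 -?realC0 ?realCM ?realCD; congr (_ %:C); ring.
Qed.

Definition fR (x y z : R) (r : nat) : R :=
  (if (r == 0%N) || (r == 1%N) || (r == 2%N) || (r == 3%N) then x else 1) *
  (if (r == 0%N) || (r == 1%N) || (r == 4%N) || (r == 5%N) then y else 1) *
  (if (r == 0%N) || (r == 2%N) || (r == 4%N) || (r == 6%N) then z else 1).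
Lemma filt_diag (x y z : R) : filt x *t (filt y *t filt z) =
  diag_mx (\row_(r < 2 * (2 * 2)) (fR x y z r)%:C).
Proof.
apply/matrixP => r s; rewrite !mxE /fR.
case: r => [[|[|[|[|[|[|[|[|//]]]]]]]] Hr]; case: s => [[|[|[|[|[|[|[|[|//]]]]]]]] Hs];
rewrite ?mxE /= ?mulr1n ?mulr0n ?mulr0 ?mul0r ?mulr1 ?mul1r ?raddf0 ?rmorphM ?rmorph1 ?mulrA //.
all: ring.
Qed.
Lemma dagger_diag n (d : 'rV[C]_n) : dagger (diag_mx d) = diag_mx (map_mx conjc d).
Proof. apply/matrixP => i j; rewrite /dagger !mxE rmorphMn eq_sym. by case: eqP => [->|]. Qed.
Lemma diag_sandwich n (d : 'rV[C]_n) (A : 'M[C]_n) r s :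
  (diag_mx d *m A *m diag_mx (map_mx conjc d)) r s = d 0 r * A r s * conjc (d 0 s).
Proof. by rewrite mul_diag_mx mul_mx_diag !mxE. Qed.
Definition rfR (p x y z : R) (r s : nat) : R :=
  if [|| (r == 0%N) && (s == 0%N), (r == 0%N) && (s == 7%N), (r == 1%N) && (s == 1%N),
        (r == 7%N) && (s == 0%N) | (r == 7%N) && (s == 7%N)]
  then (Nf p x y z)^-1 * fR x y z r * fR x y z s * rcR p r s else 0.
Lemma rho_fE p x y z (r s : 'I_(2 * (2 * 2))) :
  rho_f p x y z r s = (rfR p x y z r s)%:C.
Proof.
rewrite /rho_f scaleE filt_diag dagger_diag diag_sandwich rho_chiE !mxE conjC_real.
rewrite !realCM /rfR.
case: r => [[|[|[|[|[|[|[|[|//]]]]]]]] Hr]; case: s => [[|[|[|[|[|[|[|[|//]]]]]]]] Hs];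
  rewrite /= ?mulr0 //; congr (_ %:C); ring.
Qed.
Notation o8 k := (@Ordinal (2 * (2 * 2)) k isT).
Lemma sum8 (F : 'I_(2 * (2 * 2)) -> C) : \sum_i F i =
  F (o8 0) + F (o8 1) + F (o8 2) + F (o8 3) + F (o8 4) + F (o8 5) + F (o8 6) + F (o8 7).
Proof.
rewrite !big_ord_recl big_ord0 addr0 !addrA.
by repeat (congr (_ + _)); congr F; apply: val_inj.
Qed.
Lemma trace_rho p x y z (O : 'M[C]_(2 * (2 * 2))) :
  \tr (rho_f p x y z *m O) =
     (rfR p x y z 0 0)%:C * O (o8 0) (o8 0) + (rfR p x y z 0 7)%:C * O (o8 7) (o8 0)
   + (rfR p x y z 1 1)%:C * O (o8 1) (o8 1) + (rfR p x y z 7 0)%:C * O (o8 0) (o8 7)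
   + (rfR p x y z 7 7)%:C * O (o8 7) (o8 7).
Proof.
rewrite /mxtrace sum8 !mxE !sum8 !rho_fE.
rewrite /rfR /= !realC0 !mul0r ?addr0 ?add0r ?addrA.
reflexivity.
Qed.
End S.

Section S.
Variable R : realType.
Lemma trig8 : [/\ cos (pi / 8 : R) ^+ 2 = (2 + Num.sqrt 2) / 4,
   sin (pi / 8 : R) ^+ 2 = (2 - Num.sqrt 2) / 4 &
   cos (pi / 8 : R) * sin (pi / 8) = Num.sqrt 2 / 4].
Proof.
have pi0 : (0 : R) < pi := pi_gt0 _.
have e4 : (pi / 4 : R) = pi / 8 + pi / 8 by field.
have e2 : (pi / 2 : R) = pi / 4 + pi / 4 by field.
have h2 : Num.sqrt (2 : R) ^+ 2 = 2 by rewrite sqr_sqrtr // ler0n.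
have hs0 : 0 <= Num.sqrt (2 : R) by exact: sqrtr_ge0.
have c4p : 0 < cos (pi / 4 : R).
  apply: cos_gt0_pihalf; apply/andP; split; lra.
have s4p : 0 < sin (pi / 4 : R).
  apply: sin_gt0_pihalf; apply/andP; split; lra.
have cs4 := cos2Dsin2 (pi / 4 : R).
have c2 : cos (pi / 2 : R) = 0 := cos_pihalf _.
rewrite e2 cosD in c2.
have cc4 : cos (pi / 4 : R) ^+ 2 = 1 / 2 by rewrite -expr2 in c2 *; nra.
have ss4 : sin (pi / 4 : R) ^+ 2 = 1 / 2 by rewrite -expr2 in c2 *; nra.
have hh : (Num.sqrt 2 / 2 : R) ^+ 2 = 1 / 2 by rewrite expr_div_n h2; field.
have hh0 : (0 : R) <= Num.sqrt 2 / 2 by apply: divr_ge0; lra.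
have hc4 : cos (pi / 4 : R) = Num.sqrt 2 / 2.
  by apply/eqP; rewrite -(@eqrXn2 _ 2%N) // ?cc4 ?hh // ltW.
have hs4 : sin (pi / 4 : R) = Num.sqrt 2 / 2.
  by apply/eqP; rewrite -(@eqrXn2 _ 2%N) // ?ss4 ?hh // ltW.
have cs8 := cos2Dsin2 (pi / 8 : R).
have := hc4; rewrite e4 cosD => c8.
have := hs4; rewrite e4 sinD => s8.
split.
- rewrite -expr2 in c8; nra.
- rewrite -expr2 in c8; nra.
- nra.
Qed.
End S.

Section S6.
Local Open Scope complex_scope.
Variable R : realType.
Local Notation C := (R[i]).
Arguments rfR {R}.
Arguments fR {R}.
Arguments rcR {R}.
Notation o2 k := (@Ordinal 2 k isT).
Notation o3 k := (@Ordinal 3 k isT).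
Lemma trace_tens p x y z (A B Cm : 'M[C]_2) :
  \tr (rho_f p x y z *m (A *t (B *t Cm))) =
     (rfR p x y z 0 0)%:C * (A (o2 0) (o2 0) * (B (o2 0) (o2 0) * Cm (o2 0) (o2 0)))
   + (rfR p x y z 0 7)%:C * (A (o2 1) (o2 0) * (B (o2 1) (o2 0) * Cm (o2 1) (o2 0)))
   + (rfR p x y z 1 1)%:C * (A (o2 0) (o2 0) * (B (o2 0) (o2 0) * Cm (o2 1) (o2 1)))
   + (rfR p x y z 7 0)%:C * (A (o2 0) (o2 1) * (B (o2 0) (o2 1) * Cm (o2 0) (o2 1)))
   + (rfR p x y z 7 7)%:C * (A (o2 1) (o2 1) * (B (o2 1) (o2 1) * Cm (o2 1) (o2 1))).
Proof.
rewrite trace_rho !tensE.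
by congr (_ + _ + _ + _ + _); congr (_ * (A _ _ * (B _ _ * Cm _ _))); apply: val_inj.
Qed.

Lemma Cpair (a : R) : a%:C = a +i* 0 :> C. Proof. by []. Qed.
Lemma C1p : (1 : C) = 1 +i* 0. Proof. by []. Qed.
Lemma C0p : (0 : C) = 0 +i* 0. Proof. by []. Qed.
Ltac cpair := rewrite ?Cpair ?C1p ?C0p ?pairM ?pairD ?pairN ?pairM ?pairD ?pairN ?pairM ?pairD ?pairN;
  congr (_ +i* _); ring.
Definition mval (k2 d3 : R) (j c : nat) : R :=
  match j, c with
  | 0%N, 0%N => k2 | 0%N, 4%N => - k2 | 1%N, 1%N => - k2 | 1%N, 3%N => - k2 | 2%N, 8%N => d3
  | _, _ => 0 end.
Lemma corr_mxE p x y z : corr_mx (rho_f p x y z) =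
  \matrix_(j < 3, c < 3 * 3) (mval (2 * rfR p x y z 0 7)
      (rfR p x y z 0 0 - rfR p x y z 1 1 - rfR p x y z 7 7) j c)%:C.
Proof.
apply/matrixP => j c; rewrite !mxE; cbv zeta; rewrite trace_tens.
have e : rfR p x y z 7 0 = rfR p x y z 0 7 by rewrite /rfR /=; ring.
rewrite e.
case: j => [[|[|[|//]]] Hj]; case: c => [[|[|[|[|[|[|[|[|[|//]]]]]]]]] Hc];
rewrite !mxE /=; cpair.
Qed.

Definition gval (k2 d3 : R) (j : nat) : R :=
  match j with 0%N => 2 * k2 ^+ 2 | 1%N => 2 * k2 ^+ 2 | _ => d3 ^+ 2 end.
Lemma gramE (k2 d3 : R) :
  let M := \matrix_(j < 3, c < 3 * 3) (mval k2 d3 j c)%:C in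
  M *m dagger M = diag_mx (\row_(j < 3) (gval k2 d3 j)%:C).
Proof.
move=> M; apply/matrixP => j j'; rewrite /M !mxE.
rewrite !big_ord_recl big_ord0 !mxE !conjC_real.
case: j => [[|[|[|//]]] Hj]; case: j' => [[|[|[|//]]] Hj']; rewrite /= ?mulr0n ?mulr1n; cpair.
Qed.

Lemma sv_gen (k2 d3 s e : R) : 0 <= s -> 0 <= e -> s ^+ 2 = 2 * k2 ^+ 2 -> e ^+ 2 = d3 ^+ 2 ->
  singular_values_are (\matrix_(j < 3, c < 3 * 3) (mval k2 d3 j c)%:C) [:: s; s; e].
Proof.
move=> s0 e0 hs he; split => //=; first by rewrite s0 e0.
rewrite gramE char_poly_trig; last exact: diag_mx_is_trig.
rewrite !big_ord_recl big_ord0 !big_cons big_nil !mxE /= !mulr1n hs he.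
by [].
Qed.

Lemma tensmxDr m n p q (A : 'M[C]_(m, n)) (P Q : 'M[C]_(p, q)) : A *t (P + Q) = A *t P + A *t Q.
Proof. by apply/matrixP => i j; rewrite !mxE mulrDr. Qed.
Lemma tensmxBr m n p q (A : 'M[C]_(m, n)) (P Q : 'M[C]_(p, q)) : A *t (P - Q) = A *t P - A *t Q.
Proof. by apply/matrixP => i j; rewrite !mxE mulrBr. Qed.
Lemma sum3 (F : 'I_3 -> C) : \sum_i F i = F (o3 0) + F (o3 1) + F (o3 2).
Proof.
rewrite !big_ord_recl big_ord0 addr0 !addrA.
by repeat (congr (_ + _)); congr F; apply: val_inj.
Qed.
Lemma dotsigE (a : 'rV[R]_3) :
  [/\ dotsig a (o2 0) (o2 0) = (a 0 (o3 2))%:C, dotsig a (o2 0) (o2 1) = a 0 (o3 0) +i* (- a 0 (o3 1)),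
      dotsig a (o2 1) (o2 0) = a 0 (o3 0) +i* (a 0 (o3 1)) & dotsig a (o2 1) (o2 1) = (- a 0 (o3 2))%:C].
Proof.
rewrite /dotsig; split; rewrite summxE sum3 !scaleE !mxE /=; cpair.
Qed.
End S6.

Section S7.
Local Open Scope complex_scope.
Variable R : realType.
Local Notation C := (R[i]).
Arguments rfR {R}.
Arguments fR {R}.
Arguments rcR {R}.
Notation o2 k := (@Ordinal 2 k isT).
Notation o3 k := (@Ordinal 3 k isT).
Ltac cpair7 := rewrite ?Cpair ?C1p ?C0p ?pairM ?pairD ?pairN ?pairM ?pairD ?pairN ?pairM ?pairD ?pairN;
  congr (_ +i* _); ring.
Definition tv3 (d3 k2 : R) (fa fb fc : 'I_3 -> R) : R :=
  d3 * (fa (o3 2) * fb (o3 2) * fc (o3 2)) +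
  k2 * (fa (o3 0) * fb (o3 0) * fc (o3 0) - fa (o3 0) * fb (o3 1) * fc (o3 1)
        - fa (o3 1) * fb (o3 0) * fc (o3 1) - fa (o3 1) * fb (o3 1) * fc (o3 0)).
Lemma trace_dotsig p x y z (a b c : 'rV[R]_3) :
  \tr (rho_f p x y z *m (dotsig a *t (dotsig b *t dotsig c))) =
  (tv3 (rfR p x y z 0 0 - rfR p x y z 1 1 - rfR p x y z 7 7) (2 * rfR p x y z 0 7)
      (fun k => a 0 k) (fun k => b 0 k) (fun k => c 0 k))%:C.
Proof.
rewrite trace_tens.
have e : rfR p x y z 7 0 = rfR p x y z 0 7 by rewrite /rfR /=; ring.
rewrite e.
have [a1 a2 a3 a4] := dotsigE _ a; have [b1 b2 b3 b4] := dotsigE _ b; have [c1 c2 c3 c4] := dotsigE _ c.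
rewrite a1 a2 a3 a4 b1 b2 b3 b4 c1 c2 c3 c4 /tv3; cpair7.
Qed.

Lemma dotsigD (b b' : 'rV[R]_3) : dotsig (b + b') = dotsig b + dotsig b'.
Proof.
rewrite /dotsig -big_split; apply: eq_bigr => k _ /=.
by rewrite mxE -realCD scalerDl.
Qed.
Lemma dotsigB (b b' : 'rV[R]_3) : dotsig (b - b') = dotsig b - dotsig b'.
Proof.
rewrite /dotsig -sumrB; apply: eq_bigr => k _ /=.
by rewrite !mxE -realCD -realCN scalerDl scaleNr.
Qed.
Definition Vval (d3 k2 : R) (a a' b b' c c' : 'rV[R]_3) : R :=
  tv3 d3 k2 (fun k => a 0 k) (fun k => b 0 k + b' 0 k) (fun k => c 0 k)
  + tv3 d3 k2 (fun k => a 0 k) (fun k => b 0 k - b' 0 k) (fun k => c' 0 k)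
  + tv3 d3 k2 (fun k => a' 0 k) (fun k => b 0 k - b' 0 k) (fun k => c 0 k)
  - tv3 d3 k2 (fun k => a' 0 k) (fun k => b 0 k + b' 0 k) (fun k => c' 0 k).
Lemma svet_trace p x y z (a a' b b' c c' : 'rV[R]_3) :
  \tr (svetlichny a a' b b' c c' *m rho_f p x y z) =
  (Vval (rfR p x y z 0 0 - rfR p x y z 1 1 - rfR p x y z 7 7) (2 * rfR p x y z 0 7)
     a a' b b' c c')%:C.
Proof.
rewrite mxtrace_mulC /svetlichny; cbv zeta.
rewrite -dotsigD -dotsigB !tensmxBr !tensmxDr !mulmxDr ?mulmxN !mxtraceD ?raddfN /=.
rewrite !trace_dotsig realCN !realCD; congr (_ %:C).
rewrite /Vval /tv3 !mxE; ring.
Qed.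
End S7.

Section S8.
Variable R : realType.
Definition M1 (k2 w00 w11 : R) := k2 * (w00 - w11).
Definition M2 (k2 w01 w10 : R) := - k2 * (w01 + w10).
Definition Vexp (d3 k2 a0 a1 a2 e0 e1 e2 b0 b1 b2 f0 f1 f2 c0 c1 c2 g0 g1 g2 : R) :=
  (b0 + f0) * M1 k2 (a0 * c0 - e0 * g0) (a1 * c1 - e1 * g1)
         + (b1 + f1) * M2 k2 (a0 * c1 - e0 * g1) (a1 * c0 - e1 * g0)
         + (b2 + f2) * (d3 * (a2 * c2 - e2 * g2))
         + (b0 - f0) * M1 k2 (a0 * g0 + e0 * c0) (a1 * g1 + e1 * c1)
         + (b1 - f1) * M2 k2 (a0 * g1 + e0 * c1) (a1 * g0 + e1 * c0)
         + (b2 - f2) * (d3 * (a2 * g2 + e2 * c2)).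
Lemma keyineq (d3 k2 s0 sg : R)
  (a0 a1 a2 e0 e1 e2 b0 b1 b2 f0 f1 f2 c0 c1 c2 g0 g1 g2 : R) :
  sg ^+ 2 = 1 -> 2 * k2 ^+ 2 = s0 ^+ 2 -> d3 ^+ 2 <= s0 ^+ 2 -> 0 < s0 ->
  a0 ^+ 2 + a1 ^+ 2 + a2 ^+ 2 = 1 -> e0 ^+ 2 + e1 ^+ 2 + e2 ^+ 2 = 1 ->
  b0 ^+ 2 + b1 ^+ 2 + b2 ^+ 2 = 1 -> f0 ^+ 2 + f1 ^+ 2 + f2 ^+ 2 = 1 ->
  c0 ^+ 2 + c1 ^+ 2 + c2 ^+ 2 = 1 -> g0 ^+ 2 + g1 ^+ 2 + g2 ^+ 2 = 1 ->
  sg * Vexp d3 k2 a0 a1 a2 e0 e1 e2 b0 b1 b2 f0 f1 f2 c0 c1 c2 g0 g1 g2 <= 4 * s0.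
Proof.
move=> hsg hk hd hs ha he hb hf hc hg.
set V := Vexp _ _ _ _ _ _ _ _ _ _ _ _ _ _ _ _ _ _ _ _.
set u00 := a0 * c0 - e0 * g0; set u11 := a1 * c1 - e1 * g1; set u01 := a0 * c1 - e0 * g1;
set u10 := a1 * c0 - e1 * g0; set u22 := a2 * c2 - e2 * g2.
set u02 := a0 * c2 - e0 * g2; set u20 := a2 * c0 - e2 * g0; set u12 := a1 * c2 - e1 * g2;
set u21 := a2 * c1 - e2 * g1.
set v00 := a0 * g0 + e0 * c0; set v11 := a1 * g1 + e1 * c1; set v01 := a0 * g1 + e0 * c1;
set v10 := a1 * g0 + e1 * c0; set v22 := a2 * g2 + e2 * c2.
set v02 := a0 * g2 + e0 * c2; set v20 := a2 * g0 + e2 * c0; set v12 := a1 * g2 + e1 * c2;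
set v21 := a2 * g1 + e2 * c1.
set m1 := M1 k2 u00 u11; set m2 := M2 k2 u01 u10; set m3 := d3 * u22.
set n1 := M1 k2 v00 v11; set n2 := M2 k2 v01 v10; set n3 := d3 * v22.
have hV : V = (b0 + f0) * m1 + (b1 + f1) * m2 + (b2 + f2) * m3 + (b0 - f0) * n1 + (b1 - f1) * n2 + (b2 - f2) * n3 by rewrite /V /Vexp.
have huv : u00^+2 + u11^+2 + u01^+2 + u10^+2 + u22^+2 + u02^+2 + u20^+2 + u12^+2 + u21^+2
         + (v00^+2 + v11^+2 + v01^+2 + v10^+2 + v22^+2 + v02^+2 + v20^+2 + v12^+2 + v21^+2) = 4.
  have -> : 4 = (a0 ^+ 2 + a1 ^+ 2 + a2 ^+ 2 + (e0 ^+ 2 + e1 ^+ 2 + e2 ^+ 2)) *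
               (c0 ^+ 2 + c1 ^+ 2 + c2 ^+ 2 + (g0 ^+ 2 + g1 ^+ 2 + g2 ^+ 2)) by rewrite ha he hc hg; ring.
  rewrite /u00 /u11 /u01 /u10 /u22 /u02 /u20 /u12 /u21 /v00 /v11 /v01 /v10 /v22 /v02 /v20 /v12 /v21; ring.
have hbf : (b0 + f0) ^+ 2 + (b1 + f1) ^+ 2 + (b2 + f2) ^+ 2 + ((b0 - f0) ^+ 2 + (b1 - f1) ^+ 2 + (b2 - f2) ^+ 2) = 4.
  have -> : (4 : R) = 2 * ((b0 ^+ 2 + b1 ^+ 2 + b2 ^+ 2) + (f0 ^+ 2 + f1 ^+ 2 + f2 ^+ 2)) by rewrite hb hf; ring.
  ring.
clearbody u00 u11 u01 u10 u22 u02 u20 u12 u21 v00 v11 v01 v10 v22 v02 v20 v12 v21.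
have hm : m1 ^+ 2 + m2 ^+ 2 + m3 ^+ 2 <= s0 ^+ 2 * (u00^+2 + u11^+2 + u01^+2 + u10^+2 + u22^+2 + u02^+2 + u20^+2 + u12^+2 + u21^+2).
  rewrite /m1 /m2 /m3 /M1 /M2.
  have h1 : (u00 - u11) ^+ 2 <= 2 * (u00 ^+ 2 + u11 ^+ 2) by have := sqr_ge0 (u00 + u11); nra.
  have h2 : (u01 + u10) ^+ 2 <= 2 * (u01 ^+ 2 + u10 ^+ 2) by have := sqr_ge0 (u01 - u10); nra.
  have k0 : 0 <= k2 ^+ 2 by exact: sqr_ge0.
  have hr : 0 <= s0 ^+ 2 * (u02^+2 + u20^+2 + u12^+2 + u21^+2).
    by apply: mulr_ge0; [exact: sqr_ge0 | nra].
  have hu22 : d3 ^+ 2 * u22 ^+ 2 <= s0 ^+ 2 * u22 ^+ 2 by apply: ler_wpM2r => //; exact: sqr_ge0.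
  nra.
have hn : n1 ^+ 2 + n2 ^+ 2 + n3 ^+ 2 <= s0 ^+ 2 * (v00^+2 + v11^+2 + v01^+2 + v10^+2 + v22^+2 + v02^+2 + v20^+2 + v12^+2 + v21^+2).
  rewrite /n1 /n2 /n3 /M1 /M2.
  have h1 : (v00 - v11) ^+ 2 <= 2 * (v00 ^+ 2 + v11 ^+ 2) by have := sqr_ge0 (v00 + v11); nra.
  have h2 : (v01 + v10) ^+ 2 <= 2 * (v01 ^+ 2 + v10 ^+ 2) by have := sqr_ge0 (v01 - v10); nra.
  have k0 : 0 <= k2 ^+ 2 by exact: sqr_ge0.
  have hr : 0 <= s0 ^+ 2 * (v02^+2 + v20^+2 + v12^+2 + v21^+2).
    by apply: mulr_ge0; [exact: sqr_ge0 | nra].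
  have hu22 : d3 ^+ 2 * v22 ^+ 2 <= s0 ^+ 2 * v22 ^+ 2 by apply: ler_wpM2r => //; exact: sqr_ge0.
  nra.
clearbody V m1 m2 m3 n1 n2 n3.
have hsq : 0 <= (s0 * (b0 + f0) - sg * m1) ^+ 2 + (s0 * (b1 + f1) - sg * m2) ^+ 2 + (s0 * (b2 + f2) - sg * m3) ^+ 2
   + (s0 * (b0 - f0) - sg * n1) ^+ 2 + (s0 * (b1 - f1) - sg * n2) ^+ 2 + (s0 * (b2 - f2) - sg * n3) ^+ 2.
  by rewrite !addr_ge0 // sqr_ge0.
have hexp : (s0 * (b0 + f0) - sg * m1) ^+ 2 + (s0 * (b1 + f1) - sg * m2) ^+ 2 + (s0 * (b2 + f2) - sg * m3) ^+ 2
   + (s0 * (b0 - f0) - sg * n1) ^+ 2 + (s0 * (b1 - f1) - sg * n2) ^+ 2 + (s0 * (b2 - f2) - sg * n3) ^+ 2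
   = s0 ^+ 2 * ((b0 + f0) ^+ 2 + (b1 + f1) ^+ 2 + (b2 + f2) ^+ 2 + ((b0 - f0) ^+ 2 + (b1 - f1) ^+ 2 + (b2 - f2) ^+ 2))
     - 2 * s0 * (sg * V) + sg ^+ 2 * (m1 ^+ 2 + m2 ^+ 2 + m3 ^+ 2 + (n1 ^+ 2 + n2 ^+ 2 + n3 ^+ 2)).
  rewrite hV; ring.
rewrite hexp hbf hsg mul1r in hsq.
have h8 : 2 * s0 * (sg * V) <= 8 * s0 ^+ 2.
  have : m1 ^+ 2 + m2 ^+ 2 + m3 ^+ 2 + (n1 ^+ 2 + n2 ^+ 2 + n3 ^+ 2) <= s0 ^+ 2 * 4.
    rewrite -huv mulrDr; exact: lerD.
  lra.
have h2s : 0 < 2 * s0 by lra.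
rewrite -(ler_pM2l h2s); nra.
Qed.
End S8.

Section S9.
Local Open Scope complex_scope.
Variable R : realType.
Local Notation C := (R[i]).
Arguments rfR {R}.
Arguments fR {R}.
Arguments rcR {R}.
Arguments Vexp {R}.
Arguments M1 {R}.
Arguments M2 {R}.
Arguments Vval {R}.
Arguments tv3 {R}.
Notation o3 k := (@Ordinal 3 k isT).
Lemma normc_real (v : R) : ComplexField.Normc.normc (v%:C : C) = `|v|.
Proof. by rewrite /ComplexField.Normc.normc /= expr0n /= addr0 sqrtr_sqr. Qed.
Local Notation comp a k := (a 0 (o3 k)).
Lemma svet_valE p x y z (a a' b b' c c' : 'rV[R]_3) :
  svet_val (rho_f p x y z) a a' b b' c c' =
  `|Vexp (rfR p x y z 0 0 - rfR p x y z 1 1 - rfR p x y z 7 7) (2 * rfR p x y z 0 7)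
     (comp a 0) (comp a 1) (comp a 2) (comp a' 0) (comp a' 1) (comp a' 2)
     (comp b 0) (comp b 1) (comp b 2) (comp b' 0) (comp b' 1) (comp b' 2)
     (comp c 0) (comp c 1) (comp c 2) (comp c' 0) (comp c' 1) (comp c' 2)|.
Proof.
rewrite /svet_val svet_trace normc_real; congr (`|_|).
rewrite /Vval /tv3 /Vexp /M1 /M2; ring.
Qed.
End S9.

Section S10.
Variable R : realType.
Arguments rfR {R}.
Arguments fR {R}.
Arguments rcR {R}.
Lemma rfR_rel (p x y z : R) :
  2 * rfR p x y z 0 7 = (p * x * y * z / Nf p x y z) * (Num.sqrt 2 / 2) /\
  rfR p x y z 0 0 - rfR p x y z 1 1 - rfR p x y z 7 7 = Df p x y z / Nf p x y z.
Proof.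
have [c2 s2 cs] := trig8 R.
have e1 : p * cR R * cR R = p * ((2 + Num.sqrt 2) / 4) by rewrite -mulrA -expr2 c2.
have e2 : p * sR R * sR R = p * ((2 - Num.sqrt 2) / 4) by rewrite -mulrA -expr2 s2.
have e3 : p * cR R * sR R = p * (Num.sqrt 2 / 4) by rewrite -mulrA cs.
rewrite /rfR /= e1 e2 e3 /Df /fR /=; set Ni := (Nf _ _ _ _)^-1; by split; field.
Qed.
Lemma Nf_gt0 (p x y z : R) : 0 <= p <= 1 -> 0 < x -> 0 < y -> 0 < z -> 0 < Nf p x y z.
Proof.
move=> /andP[p0 p1] x0 y0 z0.
have h2 : Num.sqrt (2 : R) <= 2.
  have h : Num.sqrt (2 : R) ^+ 2 = 2 by rewrite sqr_sqrtr // ler0n.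
  have hs0 : 0 <= Num.sqrt (2 : R) by exact: sqrtr_ge0.
  nra.
have hs0 : 0 <= Num.sqrt (2 : R) by exact: sqrtr_ge0.
have xy : 0 < x ^+ 2 * y ^+ 2 by rewrite mulr_gt0 // exprn_gt0.
have xyz : 0 < x ^+ 2 * y ^+ 2 * z ^+ 2 by rewrite mulr_gt0 // exprn_gt0.
rewrite /Nf.
have t1 : 0 <= (2 - Num.sqrt 2) / 4 * p by apply: mulr_ge0 => //; apply: divr_ge0; lra.
have t2 : 0 <= (1 - p) / 2 * (x ^+ 2 * y ^+ 2) by apply: mulr_ge0; [apply: divr_ge0; lra | lra].
have t3 : 0 < (2 + Num.sqrt 2 * p) / 4 * (x ^+ 2 * y ^+ 2 * z ^+ 2).
  apply: mulr_gt0 => //; apply: divr_gt0; [nra | lra].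
lra.
Qed.
End S10.

Section S12.
Variable R : realType.
Lemma viol_choice (p : R) : 3697%:R / 10000%:R <= p <= 1 ->
  Nf p (1/50) (1/50) (2 * p / (2 + Num.sqrt 2 * p) * (50 * 50))
    < p * (1/50) * (1/50) * (2 * p / (2 + Num.sqrt 2 * p) * (50 * 50)).
Proof.
move=> /andP[hp0 hp1].
have hp : (37 * 100 - 3) / (100 * 100) <= p by lra.
clear hp0.
set s := Num.sqrt 2.
have hs2 : s ^+ 2 = 2 by rewrite sqr_sqrtr // ler0n.
have hs0 : 0 <= s by exact: sqrtr_ge0.
have hsl : 707 / 500 < s.
  rewrite ltNge; apply/negP => hle.
  have : s ^+ 2 <= 707 / 500 * (707 / 500) by rewrite expr2; apply: ler_pM.
  rewrite hs2; lra.
have hsu : s <= 2.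
  rewrite leNgt; apply/negP => hlt.
  have : 2 * 2 < s ^+ 2 by rewrite expr2; apply: ltr_pM; lra.
  rewrite hs2; lra.
have hsp : 0 <= s * p by apply: mulr_ge0 => //; lra.
set w := 2 + s * p.
have hw : 0 < w by rewrite /w; lra.
set e : R := (1/50) ^+ 2 * (1/50) ^+ 2.
have he0 : 0 <= e by rewrite /e; apply: mulr_ge0; apply: exprn_ge0; lra.
have he : e <= 1 / (10 * 10 * 10) * (1 / (10 * 10 * 10)) by rewrite /e !expr2; lra.
have hnum : 0 < 4 * p ^+ 2 - (2 - s) * p * w - 2 * (1 - p) * e * w.
  have h1 : 0 <= (s - 707 / 500) * (1 - p) by apply: mulr_ge0; lra.
  have h2 : 0 <= (p - (37 * 100 - 3) / (100 * 100)) * (6 * p - 4 + 2 * s * (1 - p)) by apply: mulr_ge0; lra.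
  have h3 : 0 <= (2 - s) * p by apply: mulr_ge0; lra.
  have h4 : 0 <= p * w by apply: mulr_ge0; lra.
  have h5 : (1 - p) * w <= 4 by rewrite /w in h4 *; lra.
  have hC : 2 * (1 - p) * e * w <= 8 * e.
    have -> : 2 * (1 - p) * e * w = 2 * e * ((1 - p) * w) by ring.
    have -> : 8 * e = 2 * e * 4 by ring.
    apply: ler_wpM2l => //; lra.
  have -> : 4 * p ^+ 2 - (2 - s) * p * w - 2 * (1 - p) * e * w =
     p * (6 * p - 4 + 2 * s * (1 - p)) + (s ^+ 2 - 2) * p ^+ 2 - 2 * (1 - p) * e * w by rewrite /w; ring.
  rewrite hs2 subrr mul0r addr0. lra.
have key : p * (1/50) * (1/50) * (2 * p / w * (50 * 50)) - Nf p (1/50) (1/50) (2 * p / w * (50 * 50))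
   = (4 * p ^+ 2 - (2 - s) * p * w - 2 * (1 - p) * e * w) / (4 * w).
  rewrite /Nf /e -/s -/w; field; lra.
have : 0 < p * (1/50) * (1/50) * (2 * p / w * (50 * 50)) - Nf p (1/50) (1/50) (2 * p / w * (50 * 50)).
  rewrite key; apply: divr_gt0 => //; lra.
move=> h; clear key; lra.
Qed.
End S12.

Section S15.
Variable R : realType.
Arguments rfR {R}.
Arguments fR {R}.
Arguments rcR {R}.
Arguments Vexp {R}.
Arguments M1 {R}.
Arguments M2 {R}.
Notation o3 k := (@Ordinal 3 k isT).
Lemma sum3R (F : 'I_3 -> R) : \sum_i F i = F (o3 0) + F (o3 1) + F (o3 2).
Proof.
rewrite !big_ord_recl big_ord0 addr0 !addrA.
by repeat (congr (_ + _)); congr F; apply: val_inj.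
Qed.
Lemma unit3E (a : 'rV[R]_3) : unit3 a -> a 0 (o3 0) ^+ 2 + a 0 (o3 1) ^+ 2 + a 0 (o3 2) ^+ 2 = 1.
Proof. by rewrite /unit3 sum3R. Qed.
Definition vec3 (u v w : R) : 'rV[R]_3 := \row_(k < 3) nth 0 [:: u; v; w] k.
Lemma unit3_vec3 (u v w : R) : u ^+ 2 + v ^+ 2 + w ^+ 2 = 1 -> unit3 (vec3 u v w).
Proof. by rewrite /unit3 sum3R !mxE. Qed.

Lemma sq_half (t : R) : 2 * (t * (Num.sqrt 2 / 2)) ^+ 2 = t ^+ 2.
Proof.
have h : (Num.sqrt 2 / 2 : R) ^+ 2 = 1 / 2.
  by rewrite (expr_div_n (Num.sqrt 2)) sqr_sqrtr ?ler0n //; field.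
by rewrite exprMn h; field.
Qed.
Lemma attain (p x y z : R) (h := Num.sqrt 2 / 2 : R) :
  svet_val (rho_f p x y z) (vec3 1 0 0) (vec3 0 1 0) (vec3 1 0 0) (vec3 0 1 0)
     (vec3 h (- h) 0) (vec3 h h 0) = 4 * `|p * x * y * z / Nf p x y z|.
Proof.
rewrite svet_valE !mxE /=.
have [k2E _] := rfR_rel _ p x y z.
rewrite k2E.
set s0 := p * x * y * z / Nf p x y z.
have hh : h ^+ 2 = 1 / 2.
  by rewrite /h expr_div_n sqr_sqrtr ?ler0n //; field.
have -> : Vexp (rfR p x y z 0 0 - rfR p x y z 1 1 - rfR p x y z 7 7) (s0 * (Num.sqrt 2 / 2))
    1 0 0 0 1 0 1 0 0 0 1 0 h (- h) 0 h h 0 = 4 * s0 * (2 * h ^+ 2).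
  by rewrite /Vexp /M1 /M2 -/h; ring.
rewrite hh (_ : 2 * (1 / 2) = 1 :> R); last by field.
by rewrite mulr1 normrM ger0_norm.
Qed.

Lemma upper (p x y z : R) (a a' b b' c c' : 'rV[R]_3) :
  0 < p * x * y * z / Nf p x y z ->
  (Df p x y z / Nf p x y z) ^+ 2 <= (p * x * y * z / Nf p x y z) ^+ 2 ->
  unit3 a -> unit3 a' -> unit3 b -> unit3 b' -> unit3 c -> unit3 c' ->
  svet_val (rho_f p x y z) a a' b b' c c' <= 4 * (p * x * y * z / Nf p x y z).
Proof.
move=> hs hd /unit3E ha /unit3E ha' /unit3E hb /unit3E hb' /unit3E hc /unit3E hc'.
rewrite svet_valE.
have [k2E d3E] := rfR_rel _ p x y z.
rewrite k2E d3E.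
set s0 := p * x * y * z / Nf p x y z.
have hk : 2 * (s0 * (Num.sqrt 2 / 2)) ^+ 2 = s0 ^+ 2 by apply: sq_half.
rewrite ler_norml; apply/andP; split.
- rewrite lerNl -mulN1r.
  apply: keyineq => //; by rewrite sqrrN expr1n.
- rewrite -[X in X <= _]mul1r.
  apply: keyineq => //; by rewrite expr1n.
Qed.
End S15.

Theorem mainTheorem3 (R : realType) :
  (forall p x y z : R, 0 <= p <= 1 -> 0 < x -> 0 < y -> 0 < z ->
     singular_values_are (corr_mx (rho_f p x y z))
       [:: p * x * y * z / Nf p x y z; p * x * y * z / Nf p x y z;
           `|Df p x y z| / Nf p x y z]
     /\ (`|Df p x y z| < p * x * y * z ->
           is_max_svet (rho_f p x y z) (4 * (p * x * y * z) / Nf p x y z)))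
  /\
  (forall p : R, 3697%:R / 10000%:R <= p <= 1 ->
     exists x y z : R, [/\ 0 < x, 0 < y, 0 < z & violates_svet (rho_f p x y z)]).
Proof.
split.
- move=> p x y z hp hx hy hz.
  have hN := @Nf_gt0 R p x y z hp hx hy hz.
  have [k2E d3E] := rfR_rel _ p x y z.
  have hp0 : 0 <= p by case/andP: hp.
  have hs0 : 0 <= p * x * y * z / Nf p x y z.
    by apply: divr_ge0; [rewrite !mulr_ge0 // ltW | exact: ltW].
  split.
  + rewrite corr_mxE; apply: sv_gen => //.
    * by apply: divr_ge0; [exact: normr_ge0 | exact: ltW].
    * by rewrite k2E sq_half.
    * by rewrite d3E !expr_div_n real_normK // num_real.
  + move=> hD.
    have hs : 0 < p * x * y * z / Nf p x y z.
      by apply: divr_gt0 => //; apply: le_lt_trans hD.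
    have e4 : 4 * (p * x * y * z) / Nf p x y z = 4 * (p * x * y * z / Nf p x y z) by rewrite [RHS]mulrA.
    rewrite e4; split.
    * move=> a a' b b' c c' ha ha' hb hb' hc hc'; apply: upper => //.
      rewrite -(real_normK (num_real (Df p x y z / Nf p x y z))).
      apply: lerXn2r; rewrite ?nnegrE ?normr_ge0 ?(ltW hs) //.
      rewrite normrM (@ger0_norm _ (Nf p x y z)^-1); last by rewrite invr_ge0 ltW.
      by apply: ler_wpM2r; [rewrite invr_ge0 ltW | exact: ltW].
    * pose h := Num.sqrt 2 / 2 : R.
      have hh : h ^+ 2 = 1 / 2 by rewrite /h expr_div_n sqr_sqrtr ?ler0n //; field.
      exists (vec3 R 1 0 0), (vec3 R 0 1 0), (vec3 R 1 0 0), (vec3 R 0 1 0), (vec3 R h (- h) 0), (vec3 R h h 0).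
      split.
        do !split; apply: unit3_vec3; rewrite ?sqrrN ?hh; by field.
      by rewrite /h attain ger0_norm.
- move=> p hp.
  have hp' := hp.
  case/andP: hp' => hp0 hp1.
  have hpp : 0 < p by apply: lt_le_trans hp0; apply: divr_gt0; rewrite ltr0n.
  pose s := Num.sqrt 2 : R.
  have hs0 : 0 <= s by exact: sqrtr_ge0.
  have hw : 0 < 2 + s * p by apply: ltr_wpDr; [apply: mulr_ge0 => //; exact: ltW | rewrite ltr0n].
  pose z := 2 * p / (2 + s * p) * (50 * 50).
  have hz : 0 < z by rewrite /z !mulr_gt0 // ?invr_gt0 // ltr0n.
  have hx : (0 : R) < 1 / 50 by rewrite divr_gt0 ?ltr0n.
  exists (1/50), (1/50), z; split => //.
  have hpr : 0 <= p <= 1 by rewrite ltW.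
  have hN := @Nf_gt0 R p _ _ _ hpr hx hx hz.
  have hv := @viol_choice R p hp.
  pose h := Num.sqrt 2 / 2 : R.
  have hh : h ^+ 2 = 1 / 2 by rewrite /h expr_div_n sqr_sqrtr ?ler0n //; field.
  exists (vec3 R 1 0 0), (vec3 R 0 1 0), (vec3 R 1 0 0), (vec3 R 0 1 0), (vec3 R h (- h) 0), (vec3 R h h 0).
  split.
    do !split; apply: unit3_vec3; rewrite ?sqrrN ?hh; by field.
  rewrite /h attain.
  have h1 : 1 < p * (1/50) * (1/50) * z / Nf p (1/50) (1/50) z.
    rewrite ltr_pdivlMr // !mul1r; move: hv; rewrite !mul1r => hv; exact hv.
  rewrite ger0_norm; last by apply: le_trans (ltW h1).
  lra.
Qed.
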